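(* Let $m\ge 1$ and $\alpha,\beta^1,\dots,\beta^m\in\mathrm{ord}$. Then $\alpha<\beta^1,\dots,\beta^m$ holds if and only if $\alpha<\sup(\beta^1,\dots,\beta^m)$ (the right-hand side being a one-element list). Similarly, $\alpha\le\beta^1,\dots,\beta^m$ holds if and only if $\alpha\le\sup(\beta^1,\dots,\beta^m)$.
   Context: Work constructively (intuitionistic logic). Let $\mathfrak F$ be a set of index sets such that: $\mathbb N$ and each $\mathbb N_k=\{n\in\mathbb N:n<k\}$ ($k\ge 0$) belong to $\mathfrak F$; every finitely enumerated subset of an element of $\mathfrak F$ is isomorphic to an element of $\mathfrak F$; for $J\in\mathfrak F$ the set of finitely enumerated subsets of $J$ is isomorphic to an element of $\mathfrak F$; $\mathfrak F$ is stable under disjoint unions indexed by elements of $\mathfrak F$. A finitely enumerated subset of $A$ is one given by a map $\mathbb N_k\to A$; write $F\subseteq_f I$. The set $\mathrm{ord}$ of (names of) ordinals is inductively generated by a distinguished element $\underline 0$ and, for every family $(\alpha_i)_{i\in I}$ with $I\in\mathfrak F$ and $\alpha_i\in\mathrm{ord}$, an element $\mathrm S(\alpha_i)_{i\in I}$. Elements of the second kind form $\mathrm{ord}^*$; for $\alpha=\mathrm S(\alpha_i)_{i\in I}$ put $I_\alpha=I$ and call the $\alpha_i$ its definitional subordinals; by convention $I_{\underline 0}=\mathbb N_0=\emptyset$. For a finite list $F$ in $I_\alpha$, $\alpha_F$ is the list of the $\alpha_i$, $i\in F$. Supremum: for a family $(\alpha^j)_{j\in J}$ in $\mathrm{ord}^*$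 with $J\in\mathfrak F$, $\sup(\alpha^j)_{j\in J}=\mathrm S(\varepsilon_k)_{k\in K}$ where $K$ is the disjoint union of the $I_{\alpha^j}$ (with injections $\iota_j$) and $\varepsilon_{\iota_j(i)}=(\alpha^j)_i$. For a finite family in $\mathrm{ord}$, $\sup(\alpha^1,\dots,\alpha^r)$ is $\underline 0$ if all $\alpha^k$ are $\underline 0$, and otherwise the sup of those $\alpha^k$ in $\mathrm{ord}^*$. Two relations between an element of $\mathrm{ord}$ and a nonempty finite list of elements of $\mathrm{ord}$ are defined by simultaneous induction: $\alpha\le\beta^1,\dots,\beta^m$ means $\alpha_i<\beta^1,\dots,\beta^m$ for all $i\in I_\alpha$; $\alpha<\beta^1,\dots,\beta^m$ means there exist $F_1\subseteq_f I_{\beta^1},\dots,F_m\subseteq_f I_{\beta^m}$, not all empty, with $\alpha\le\beta^1_{F_1},\dots,\beta^m_{F_m}$ (concatenated list). *)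

(* Defs.v *)
From mathcomp Require Import all_boot.
Set Implicit Arguments. Unset Strict Implicit. Unset Printing Implicit Defensive.

Record iso (A B : Type) : Type := Iso {
  iso_fw : A -> B;
  iso_bw : B -> A;
  iso_fwK : forall x, iso_bw (iso_fw x) = x;
  iso_bwK : forall y, iso_fw (iso_bw y) = y }.

Definition fe_subset (A : Type) (k : nat) (f : 'I_k -> A) : Type :=
  {x : A | exists i, f i = x}.

(* The class \mathfrak F of index sets: a type of codes [code] with their
   interpretation [El], together with witnesses of the closure properties. *)
Record IndexFam : Type := {
  code : Type;
  El : code -> Type;
  cN : code;
  isoN : iso (El cN) nat;
  cNk : nat -> code;
  isoNk : forall k, iso (El (cNk k)) 'I_k;
  cFin : forall (c : code) (k : nat) (f : 'I_k -> El c), code;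
  isoFin : forall c k (f : 'I_k -> El c), iso (El (cFin f)) (fe_subset f);
  cPf : code -> code;
  isoPf : forall c, iso (El (cPf c)) {k : nat & 'I_k -> El c};
  cSum : forall (c : code) (d : El c -> code), code;
  isoSum : forall c (d : El c -> code), iso (El (cSum d)) {i : El c & El (d i)} }.

Section Ord.
Variable FF : IndexFam.

(* Names of ordinals: 0 and S(alpha_i)_{i in I}, I in F. *)
Inductive ord : Type :=
| O0 : ord
| Sup : forall c : code FF, (El c -> ord) -> ord.

(* I_alpha, with the convention I_0 = N_0 *)
Arguments Sup : clear implicits.

Definition idx (a : ord) : code FF :=
  match a with O0 => cNk FF 0 | Sup c _ => c end.

(* definitional subordinals (the O0 case is vacuous since I_0 is empty) *)
Definition sub (a : ord) : El (idx a) -> ord :=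
  match a return El (idx a) -> ord with
  | O0 => fun _ => O0
  | Sup _ f => f end.

Arguments sub : clear implicits.

Definition isSup (a : ord) : bool := if a is Sup _ _ then true else false.

(* A choice of finite lists F_1 ⊆_f I_{b1}, ..., F_m ⊆_f I_{bm} *)
Fixpoint sel (L : seq ord) : Type :=
  match L with
  | [::] => unit
  | b :: L' => (seq (El (idx b)) * sel L')%type
  end.

Fixpoint sel_ne (L : seq ord) : sel L -> Prop :=
  match L return sel L -> Prop with
  | [::] => fun _ => False
  | b :: L' => fun s => (0 < size s.1)%N \/ sel_ne s.2
  end.

Fixpoint selected (L : seq ord) : sel L -> seq ord :=
  match L return sel L -> seq ord with
  | [::] => fun _ => [::]
  | b :: L' => fun s => map (sub b) s.1 ++ selected s.2
  end.

(* alpha <= L : for all i in I_alpha, alpha_i < L, where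
   alpha_i < L : exists F_j not all empty with alpha_i <= L_F. *)
Fixpoint ord_le (a : ord) (L : seq ord) : Prop :=
  match a with
  | O0 => True (* I_0 is empty *)
  | Sup c f => forall i : El c,
      exists s : sel L, sel_ne s /\ ord_le (f i) (selected s)
  end.

Definition ord_lt (a : ord) (L : seq ord) : Prop :=
  exists s : sel L, sel_ne s /\ ord_le a (selected s).

(* sup of a finite family: 0 if all are 0, otherwise the sup (disjoint-union
   construction) of the nonzero members, indexed by N_r. *)
Definition ord_sup (L : seq ord) : ord :=
  let nz := filter isSup L in
  let r := size nz in
  let pick := fun x : El (cNk FF r) => nth O0 nz (iso_fw (isoNk FF r) x) in
  let d := fun x => idx (pick x) in
  match nz with
  | [::] => O0
  | _ :: _ => Sup (cSum d)
      (fun y => let p := iso_fw (@isoSum FF (cNk FF r) d) y in sub (pick (projT1 p)) (projT2 p))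
  end.

End Ord.

(* Main.v *)
Require Import Defs.
From mathcomp Require Import all_boot.
From Stdlib Require List Permutation.

Set Implicit Arguments. Unset Strict Implicit.
Notation In := List.In.
Notation Perm := Permutation.Permutation.

Lemma in_cat_or {T} (x : T) l1 l2 : In x (l1 ++ l2) -> In x l1 \/ In x l2.
Proof. elim: l1 => [|a l IH] /=; first by right. move=> [->|H]; first by left; left.
case: (IH H); auto. Qed.

Lemma in_map_ex {A B} (f : A -> B) l y : In y (map f l) -> exists x, f x = y.
Proof. elim: l => [|a l IH] /=; first by []. move=> [<-|H]; eauto. Qed.

Lemma perm_mid {T} (x : T) l1 l2 : Perm (l1 ++ x :: l2) (x :: l1 ++ l2).
Proof. elim: l1 => [|a l IH] /=; first by apply Permutation.Permutation_refl.
eapply Permutation.perm_trans; first by apply Permutation.perm_skip, IH.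
apply Permutation.perm_swap. Qed.

Lemma perm_catl {T} (l1 l2 l3 : seq T) : Perm l2 l3 -> Perm (l1 ++ l2) (l1 ++ l3).
Proof. elim: l1 => [|a l IH] //= H. by apply Permutation.perm_skip, IH. Qed.

Lemma nth_In' {T} (x0 : T) l k : (k < size l)%N -> In (nth x0 l k) l.
Proof. elim: l k => [|a l IH] [|k] //=; auto. Qed.

Lemma In_nth' {T} (x0 x : T) l : In x l -> exists k, (k < size l)%N /\ nth x0 l k = x.
Proof. elim: l => [|a l IH] //= [->|H]; first by exists 0%N.
case: (IH H) => k [hk ek]; by exists k.+1. Qed.

Lemma In_filter_l {T} (p : pred T) (x : T) l : In x (filter p l) -> In x l.
Proof. elim: l => [|a l IH] //=; case: (p a) => /=; [move=> [->|H]|]; auto. Qed.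

Lemma In_filter_r {T} (p : pred T) (x : T) l : In x l -> p x -> In x (filter p l).
Proof. elim: l => [|a l IH] //= [<-|H] hp; first by rewrite hp; left.
case: (p a) => /=; auto. Qed.

Fixpoint sel0 FF (L : seq (ord FF)) : sel L :=
  match L return sel L with [::] => tt | b :: L' => ([::], sel0 L') end.

Lemma selected0 FF (L : seq (ord FF)) : selected (sel0 L) = [::].
Proof. by elim: L => //= b L ->. Qed.

Lemma sel_ne_iff FF (L : seq (ord FF)) (s : sel L) : sel_ne s <-> selected s <> [::].
Proof.
elim: L s => [|b L IH] /=; first by move=> s; split=> // H; apply H.
move=> [l s] /=; case: l => [|x l] /=.
  rewrite -IH; split; [by case|by right].
split=> // _; by left.
Qed.

Lemma elems FF (L : seq (ord FF)) (s : sel L) o :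
  In o (selected s) -> exists b (j : El (idx b)), In b L /\ sub j = o.
Proof.
elim: L s => [|b L IH] /=; first by [].
move=> [l s] /= H0; case: (in_cat_or H0) => H.
  case: (in_map_ex H) => j e. exists b, j; split=> //; by left.
case: (IH s H) => b' [j [Hb e]]. exists b', j; split=> //; by right.
Qed.

Lemma insert FF (L : seq (ord FF)) (s : sel L) b (j : El (idx b)) :
  In b L -> exists s' : sel L, Perm (selected s') (sub j :: selected s).
Proof.
elim: L s => [|b' L IH] /=; first by [].
move=> [l s] [e|H].
  subst b'. exists (j :: l, s). apply Permutation.Permutation_refl.
case: (IH s H) => s' P. exists (l, s') => /=.
eapply Permutation.perm_trans; first by apply perm_catl, P.
apply perm_mid.
Qed.

Lemma build FF (L l : seq (ord FF)) :
  (forall o, In o l -> exists b (j : El (idx b)), In b L /\ sub j = o) ->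
  exists s : sel L, Perm (selected s) l.
Proof.
elim: l => [|o l IH] H.
  exists (sel0 L); rewrite selected0; apply Permutation.Permutation_refl.
case: IH => [o' Ho'|s P]; first by apply H; right.
case: (H o) => [|b [j [Hb e]]]; first by left.
case: (insert s j Hb) => s' P'. exists s'.
eapply Permutation.perm_trans; first exact P'.
rewrite e; by apply Permutation.perm_skip.
Qed.

Definition Subc FF (L L' : seq (ord FF)) :=
  forall b (j : El (idx b)), In b L -> exists b' (j' : El (idx b')), In b' L' /\ sub j' = sub j.

Lemma Subc_perm FF (l l' : seq (ord FF)) : Perm l' l -> Subc l l'.
Proof. move=> P b j Hb. exists b, j; split=> //.
by apply: Permutation.Permutation_in (Permutation.Permutation_sym P) Hb. Qed.

Lemma step FF (L L' : seq (ord FF)) : Subc L L' -> forall s : sel L, sel_ne s ->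
  exists s' : sel L', sel_ne s' /\ Perm (selected s') (selected s).
Proof.
move=> HS s ne.
case: (@build _ L' (selected s)) => [o Ho|s' P].
  case: (elems Ho) => b [j [Hb e]]. case: (HS b j Hb) => b' [j' [Hb' e']].
  exists b', j'; split=> //; congruence.
exists s'; split=> //. apply/sel_ne_iff => E. move/sel_ne_iff: ne; apply.
rewrite E in P. by apply Permutation.Permutation_nil.
Qed.

Lemma le_sub FF (x : ord FF) : forall L L', Subc L L' -> ord_le x L -> ord_le x L'.
Proof.
elim: x => [|c f IH] //= L L' HS H i.
case: (H i) => s [ne Hle]. case: (step HS ne) => s' [ne' P].
exists s'; split=> //. apply: IH Hle. exact: Subc_perm.
Qed.

Lemma lt_sub FF (x : ord FF) L L' : Subc L L' -> ord_lt x L -> ord_lt x L'.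
Proof.
move=> HS [s [ne Hle]]. case: (step HS ne) => s' [ne' P].
exists s'; split=> //. apply: le_sub Hle. exact: Subc_perm.
Qed.

Lemma sub_transport FF (b b' : ord FF) (e : b = b') (j : El (idx b)) :
  sub (eq_rect b (fun o => El (idx o)) j b' e) = sub j.
Proof. by destruct e. Qed.

Lemma Subc_S_L FF (L : seq (ord FF)) : Subc [:: ord_sup L] L.
Proof.
move=> b j [e|[]]; subst b. move: j.
rewrite /ord_sup. case E: (filter (@isSup FF) L) => [|h t] /= j.
  by case: (iso_fw (isoNk FF 0) j).
set p := iso_fw _ j.
exists (nth (O0 FF) (h :: t) (iso_fw (isoNk FF (size t).+1) (projT1 p))), (projT2 p).
split=> //. apply: (@In_filter_l _ (@isSup FF)). rewrite E. apply nth_In'. exact: ltn_ord.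
Qed.

Lemma Subc_L_S FF (L : seq (ord FF)) : Subc L [:: ord_sup L].
Proof.
move=> b j Hb.
case: b j Hb => [|c f] j Hb.
  by case: (iso_fw (isoNk FF 0) j).
have Hin : In (Sup f) (filter (@isSup FF) L) by apply: In_filter_r.
suff [y ey] : exists y : El (idx (ord_sup L)), sub y = sub j.
  exists (ord_sup L), y; split=> //; by left.
move: Hin. rewrite /ord_sup. case E: (filter (@isSup FF) L) => [|h t] // Hin.
case: (In_nth' (O0 FF) Hin) => k [hk ek].
set x := iso_bw (isoNk FF (size t).+1) (Ordinal hk).
have e : Sup f = nth (O0 FF) (h :: t) (iso_fw (isoNk FF (size t).+1) x).
  by rewrite /x iso_bwK.
eexists (iso_bw (@isoSum FF _ _) (@existT _ (fun z => El (idx (nth (O0 FF) (h :: t) (iso_fw (isoNk FF (size t).+1) z)))) x (eq_rect _ (fun o => El (idx o)) j _ e))).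
rewrite /= (@iso_bwK _ _ (@isoSum FF _ _)) /=. exact: sub_transport.
Qed.

Unset Implicit Arguments. Set Strict Implicit.

Theorem lemma3p7 (FF : IndexFam) (a : ord FF) (L : seq (ord FF)) :
  (0 < size L)%N ->
  (ord_lt a L <-> ord_lt a [:: ord_sup L]) /\
  (ord_le a L <-> ord_le a [:: ord_sup L]).
Proof.
move=> _; split; split.
- apply: lt_sub; exact: Subc_L_S.
- apply: lt_sub; exact: Subc_S_L.
- apply: le_sub; exact: Subc_L_S.
- apply: le_sub; exact: Subc_S_L.
Qed.
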